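(* Let $T$ be a training dataset with $m$ features and $n$ records, where each feature takes at most $v$ possible values. Let $y_{\min}$ be the class label with the fewest records in $T$ and $n_{y_{\min}}$ the number of records with label $y_{\min}$. Then naive Bayes with Laplace smoothing is $\delta$-training stable on $T$ with $\delta=\left(\frac{n_{y_{\min}}+v}{n_{y_{\min}}}\right)^{m-1}\frac{n}{n-1}$.
   Context: Records are pairs $(\mathbf{x},y)$ with $\mathbf{x}=(x_1,\dots,x_m)\in X^m$ and $y\in Y$ finite; a training dataset is a finite multiset of records. For a dataset $S$ of size $N_S$, let $n^S_y$ be the number of records with label $y$ and $n^S_{x_i,y}$ the number with $i$-th feature $x_i$ and label $y$. Naive Bayes with Laplace smoothing trained on $S$ gives $p_{\mathcal{A}(S)}(y\mid\mathbf{x})=\hat p_S(y)\prod_{i=1}^m\hat p_S(x_i\mid y)$ with $\hat p_S(y)=n^S_y/N_S$ and smoothed conditionals $\hat p_S(x_i\mid y)=(n^S_{x_i,y}+1)/(n^S_y+v)$. $\mathcal{A}$ is $\delta$-training stable on $T$ (for a constant $\delta>1$) if for every $t=(\mathbf{x}^{(t)},y^{(t)})\in T$ with $p_{\mathcal{A}(T\setminus\{t\})}(y^{(t)}\mid\mathbf{x}^{(t)})>0$ and $p_{\mathcal{A}(T)}(y^{(t)}\mid\mathbf{x}^{(t)})>0$, setting $\gamma_t=\max\Big(\delta,\ \frac{p_{\mathcal{A}(T)}(y^{(t)}\mid\mathbf{x}^{(t)})}{p_{\mathcal{A}(T\setminus\{t\})}(y^{(t)}\mid\mathbf{x}^{(t)})},\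 \frac{p_{\mathcal{A}(T\setminus\{t\})}(y^{(t)}\mid\mathbf{x}^{(t)})}{p_{\mathcal{A}(T)}(y^{(t)}\mid\mathbf{x}^{(t)})}\Big)$, one has $\gamma_t^{-1}p_{\mathcal{A}(T\setminus\{t\})}(y\mid\mathbf{x})\le p_{\mathcal{A}(T)}(y\mid\mathbf{x})\le\gamma_t\,p_{\mathcal{A}(T\setminus\{t\})}(y\mid\mathbf{x})$ for all $\mathbf{x}\in X^m$, $y\in Y$. *)

(* Defs.v *)
From HB Require Import structures.
From mathcomp Require Import all_boot all_order all_algebra.
Set Implicit Arguments. Unset Strict Implicit. Unset Printing Implicit Defensive.
Import Order.TTheory GRing.Theory Num.Theory.
Local Open Scope ring_scope.

(* A dataset is a finite multiset of records, represented as a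
   sequence (all quantities below are order-invariant counts). *)

Definition n_lab (X Y : eqType) (m : nat) (S : seq (m.-tuple X * Y)) (y : Y) : nat :=
  count (fun r => r.2 == y) S.

Definition n_feat (X Y : eqType) (m : nat) (S : seq (m.-tuple X * Y))
    (i : 'I_m) (a : X) (y : Y) : nat :=
  count (fun r => (tnth r.1 i == a) && (r.2 == y)) S.

Definition nb_prob (R : realFieldType) (X Y : eqType) (m v : nat)
    (S : seq (m.-tuple X * Y)) (x : m.-tuple X) (y : Y) : R :=
  ((n_lab S y)%:R / (size S)%:R) *
  \prod_(i < m) (((n_feat S i (tnth x i) y).+1)%:R / ((n_lab S y + v)%N)%:R).

Definition training_stable (R : realFieldType) (X Y : finType) (m : nat)
    (A : seq (m.-tuple X * Y) -> m.-tuple X -> Y -> R) (delta : R)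
    (T : seq (m.-tuple X * Y)) : Prop :=
  1 < delta /\
  forall t : m.-tuple X * Y, t \in T ->
    0 < A (rem t T) t.1 t.2 -> 0 < A T t.1 t.2 ->
    let gamma := Num.max delta
                   (Num.max (A T t.1 t.2 / A (rem t T) t.1 t.2)
                            (A (rem t T) t.1 t.2 / A T t.1 t.2)) in
    forall (x : m.-tuple X) (y : Y),
      gamma^-1 * A (rem t T) x y <= A T x y /\ A T x y <= gamma * A (rem t T) x y.

(* Main.v *)
Require Import Defs.
From HB Require Import structures.
From mathcomp Require Import all_boot all_order all_algebra.
From mathcomp Require Import zify ring lra.
Import Order.TTheory GRing.Theory Num.Theory.
Local Open Scope ring_scope.

Lemma upper_gen (R : realFieldType) (m n' N' v : nat) (c c' ct ct' : 'I_m -> nat) :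
  (forall i, ct i = (ct' i).+1) ->
  (forall i, c i = c' i \/ (c i = ct i /\ c' i = ct' i)) ->
  ((n'.+1)%:R / (N'.+1)%:R * \prod_(i < m) ((c i).+1%:R / ((n'.+1 + v)%N)%:R)) *
  (n'%:R / N'%:R * \prod_(i < m) ((ct' i).+1%:R / ((n' + v)%N)%:R))
  <= ((n'.+1)%:R / (N'.+1)%:R * \prod_(i < m) ((ct i).+1%:R / ((n'.+1 + v)%N)%:R)) *
  (n'%:R / N'%:R * \prod_(i < m) ((c' i).+1%:R / ((n' + v)%N)%:R)) :> R.
Proof.
move=> hct hc.
rewrite [X in X <= _]mulrACA [X in _ <= X]mulrACA.
apply: ler_wpM2l; first by apply: mulr_ge0; apply: divr_ge0.
rewrite -!big_split /=; apply: ler_prod => i _.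
rewrite !mulf_div; apply/andP; split.
  by apply: divr_ge0; rewrite -natrM ler0n.
apply: ler_wpM2r; first by rewrite invr_ge0 -natrM ler0n.
rewrite -!natrM ler_nat.
have := hct i; case: (hc i) => [->|[-> ->]] -> ; nia.
Qed.
Lemma lower_gen (R : realFieldType) (m n' N' v nmin : nat) (c c' : 'I_m -> nat) :
  (forall i, (c' i <= c i)%N) -> (0 < nmin)%N -> (nmin <= n'.+1)%N -> (1 <= v)%N ->
  (0 < N')%N -> (0 < m)%N ->
  n'%:R / N'%:R * \prod_(i < m) ((c' i).+1%:R / ((n' + v)%N)%:R)
  <= (((nmin + v)%N)%:R / nmin%:R) ^+ m.-1 * ((N'.+1)%:R / N'%:R) *
     ((n'.+1)%:R / (N'.+1)%:R * \prod_(i < m) ((c i).+1%:R / ((n'.+1 + v)%N)%:R)) :> R.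
Proof.
move=> hc nm0 nmn v1 N0 m0.
set G := \prod_(i < m) ((c i).+1%:R / ((n'.+1 + v)%N)%:R : R).
set A := (((nmin + v)%N)%:R / nmin%:R : R).
set q := (((n'.+1 + v)%N)%:R / ((n' + v)%N)%:R : R).
have nv0 : 0 < ((n' + v)%N)%:R :> R by rewrite ltr0n; lia.
have nv1 : 0 < ((n'.+1 + v)%N)%:R :> R by rewrite ltr0n; lia.
have G0 : 0 <= G by apply: prodr_ge0 => i _; apply: divr_ge0.
have q0 : 0 <= q by apply: divr_ge0.
have F : \prod_(i < m) ((c' i).+1%:R / ((n' + v)%N)%:R) <= q ^+ m * G :> R.
  have -> : q ^+ m = \prod_(i < m) q by rewrite prodr_const card_ord.
  rewrite -big_split /=; apply: ler_prod => i _.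
  apply/andP; split; first by apply: divr_ge0.
  have -> : q * ((c i).+1%:R / ((n'.+1 + v)%N)%:R) = (c i).+1%:R / ((n' + v)%N)%:R.
    rewrite /q; field; have := ler0n R n'; have : 1 <= v%:R :> R by rewrite ler1n. by move=> ? ?; apply/andP; split; apply/eqP; lra.
  by apply: ler_wpM2r; [rewrite invr_ge0 ltW | rewrite ler_nat ltnS].
have -> : A ^+ m.-1 * ((N'.+1)%:R / N'%:R) * ((n'.+1)%:R / (N'.+1)%:R * G)
   = (A ^+ m.-1 * (n'.+1)%:R) * N'%:R^-1 * G.
  field; have : 1 <= N'%:R :> R by rewrite ler1n. by move=> ?; apply/andP; split; apply/eqP; lra.
apply: (le_trans (ler_wpM2l _ F)); first by apply: divr_ge0.
rewrite mulrA; apply: ler_wpM2r => //.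
rewrite mulrAC; apply: ler_wpM2r; first by rewrite invr_ge0.
rewrite -(prednK m0) exprS mulrA mulrC.
apply: ler_pM; [by apply: exprn_ge0 | by apply: mulr_ge0 | | ].
  apply: lerXn2r; rewrite ?nnegrE //; first by apply: divr_ge0.
  rewrite /q ler_pdivrMr // mulrAC ler_pdivlMr ?ltr0n // -!natrM ler_nat; nia.
rewrite /q mulrA ler_pdivrMr // -!natrM ler_nat; nia.
Qed.

Lemma fin_low (R : realFieldType) (d g p p' : R) :
  0 < d -> d <= g -> 0 <= p -> p' <= d * p -> g^-1 * p' <= p.
Proof.
move=> d0 dg p0 h; have g0 : 0 < g by apply: lt_le_trans dg.
rewrite ler_pdivrMl //; apply: (le_trans h); exact: ler_wpM2r.
Qed.

Theorem mainTheorem4 (R : realFieldType) (X Y : finType) (m v : nat)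
    (T : seq (m.-tuple X * Y)) (ymin : Y) :
  (0 < m)%N -> (1 < size T)%N -> (#|X| <= v)%N ->
  (0 < n_lab T ymin)%N ->
  (forall y : Y, (0 < n_lab T y)%N -> (n_lab T ymin <= n_lab T y)%N) ->
  training_stable (nb_prob R v)
    ((((n_lab T ymin + v)%N)%:R / (n_lab T ymin)%:R) ^+ m.-1
       * ((size T)%:R / ((size T).-1)%:R)) T.
Proof.
move=> m0 NT Xv n0 hmin.
have v1 : (1 <= v)%N.
  have : (0 < #|X|)%N.
    case E: T NT => [|r s] // _; apply/card_gt0P; by exists (tnth r.1 (Ordinal m0)).
  lia.
set Ak := (((n_lab T ymin + v)%N)%:R / (n_lab T ymin)%:R : R) ^+ m.-1.
have Ak1 : 1 <= Ak.
  apply: exprn_ege1; rewrite ler_pdivlMr ?ltr0n // mul1r ler_nat; lia.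
set delta := Ak * _.
have hd1 : 1 < delta.
  have h : 1 < (size T)%:R / ((size T).-1)%:R :> R.
    rewrite ltr_pdivlMr ?ltr0n; last lia.
    rewrite mul1r ltr_nat; lia.
  apply: (lt_le_trans h); apply: ler_peMl => //; exact: ltW (lt_trans ltr01 h).
split => // t tT pos' pos gamma x y.
have cnt P : count P T = (P t + count P (rem t T))%N by rewrite (permP (perm_to_rem tT)).
have hN : size T = (size (rem t T)).+1.
  by rewrite size_rem // prednK // ltnW.
have N0 : (0 < size (rem t T))%N by lia.
have hdelta : delta = Ak * ((size (rem t T)).+1%:R / (size (rem t T))%:R) by rewrite /delta hN.
have gd : delta <= gamma by rewrite /gamma le_max lexx.
have grt : nb_prob R v T t.1 t.2 / nb_prob R v (rem t T) t.1 t.2 <= gamma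
  by rewrite /gamma le_max le_max lexx orbT.
have g1 : 1 <= gamma by apply: le_trans gd; exact: ltW.
have d0 : 0 < delta by apply: lt_trans hd1.
have nb0 (S : seq (m.-tuple X * Y)) (z : m.-tuple X) (w : Y) : 0 <= nb_prob R v S z w.
  by apply: mulr_ge0; [apply: divr_ge0 | apply: prodr_ge0 => i _; apply: divr_ge0].
case: (eqVneq y t.2) => [->|ne].
- have hlab : n_lab T t.2 = (n_lab (rem t T) t.2).+1 by rewrite /n_lab cnt eqxx.
  have hf i a : n_feat T i a t.2 = ((tnth t.1 i == a) + n_feat (rem t T) i a t.2)%N
    by rewrite /n_feat cnt eqxx andbT.
  split.
  + apply: (@fin_low R _ _ _ _ d0 gd); first exact: nb0.
    rewrite hdelta /nb_prob hN hlab.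
    apply: (@lower_gen R m _ _ v (n_lab T ymin) (fun i => n_feat T i (tnth x i) t.2)
                      (fun i => n_feat (rem t T) i (tnth x i) t.2)) => //.
    * by move=> i; rewrite hf leq_addl.
    * by rewrite -hlab; apply: hmin; rewrite hlab.
  + have H := ler_wpM2r (nb0 (rem t T) x t.2) grt; apply: le_trans H.
    rewrite mulrAC ler_pdivlMr //.
    rewrite /nb_prob hN hlab.
    apply: (@upper_gen R m _ _ v (fun i => n_feat T i (tnth x i) t.2)
                      (fun i => n_feat (rem t T) i (tnth x i) t.2)
                      (fun i => n_feat T i (tnth t.1 i) t.2)
                      (fun i => n_feat (rem t T) i (tnth t.1 i) t.2)).
    * by move=> i; rewrite hf eqxx.
    * move=> i; case: (eqVneq (tnth t.1 i) (tnth x i)) => [e|ne].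
        by right; rewrite e.
      by left; rewrite hf (negbTE ne).
- have ne' : t.2 != y by rewrite eq_sym.
  have hl : n_lab (rem t T) y = n_lab T y.
    by rewrite /n_lab cnt (negbTE ne').
  have hf i a : n_feat (rem t T) i a y = n_feat T i a y.
    by rewrite /n_feat cnt (negbTE ne') andbF.
  rewrite /nb_prob hl hN.
  under eq_bigr => i _ do rewrite hf.
  set P := \prod_(i < m) _.
  set n := (n_lab T y)%:R.
  have P0 : 0 <= P by apply: prodr_ge0 => i _; apply: divr_ge0.
  have Np : 0 < (size (rem t T))%:R :> R by rewrite ltr0n.
  have Np1 : 0 < (size (rem t T)).+1%:R :> R by rewrite ltr0n.
  have le1 : n / (size (rem t T)).+1%:R * P <= n / (size (rem t T))%:R * P.
    apply: ler_wpM2r => //; apply: ler_wpM2l; first by rewrite /n ler0n.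
    by rewrite lef_pV2 ?posrE // ler_nat.
  split.
  + apply: (@fin_low R _ _ _ _ d0 gd); first by apply: mulr_ge0 => //; apply: divr_ge0; rewrite ?ler0n //.
    have -> : delta * (n / (size (rem t T)).+1%:R * P) = Ak * (n / (size (rem t T))%:R * P).
      rewrite hdelta; field; have := ler0n R (size (rem t T)); move=> ?; apply/andP; split; apply/eqP; lra.
    apply: ler_peMl => //; apply: mulr_ge0 => //; apply: divr_ge0; rewrite ?ler0n //.

  apply: (le_trans le1); apply: ler_peMl => //.
  apply: mulr_ge0 => //; apply: divr_ge0; rewrite ?ler0n //.
Qed.
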